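(* Let $p\in\mathbb N$. For each $n \in \mathbb N$ and $q \in \{0,1,\dots,\lfloor pn/(p+1)\rfloor\}$, $$\sum_{\mathbf m \in S_{n,q,p}} \pi_{\mathbf m} = \sum_{\substack{\mathbf k=(k_1,\dots,k_{p+1})\in\{0,1,2,\dots\}^{p+1}\\ \sum_{j=1}^{p+1} j k_j = n,\ \sum_{j=1}^{p+1} k_j = n-q}} \frac{1}{k_1!\,k_2!\cdots k_{p+1}!\; 2^{k_2}\cdots (p+1)^{k_{p+1}}}.$$
   Context: $S_{n,q,p} = \{\mathbf m=(m_1,\dots,m_{n-q}) \in \{0,1,\dots,p\}^{n-q} : m_1+\cdots+m_{n-q}=q\}$, and $\pi_{\mathbf m} = \prod_{i=1}^{n-q}[m_i+\cdots+m_{n-q} + (n-q-i+1)]^{-1}$. *)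

(* Defs.v *)
From mathcomp Require Export all_boot all_order all_algebra.
Set Implicit Arguments. Unset Strict Implicit. Unset Printing Implicit Defensive.
Export GRing.Theory Num.Theory.

(* S_{n,q,p}: vectors m = (m_1,...,m_{n-q}) with entries in {0,...,p}
   (encoded as 'I_p.+1) summing to q.  Indices are 0-based: m_{i+1} = m i. *)
Definition in_S (n q p : nat) (m : {ffun 'I_(n - q) -> 'I_p.+1}) : bool :=
  (\sum_(i < n - q) (m i : nat) == q)%N.

(* pi_m = prod_{i=1}^{n-q} [m_i + ... + m_{n-q} + (n-q-i+1)]^{-1};
   with 0-based index i (= paper's i-1) the factor is
   [sum_{j >= i} m_j + (n - q - i)]^{-1}. *)
Definition pi_m (n q p : nat) (m : {ffun 'I_(n - q) -> 'I_p.+1}) : rat :=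
  \prod_(i < n - q)
     (((\sum_(j < n - q | (i <= j)%N) (m j : nat)) + (n - q - i))%N%:R)^-1.

(* Condition on k = (k_1,...,k_{p+1}) (0-based: k_{j+1} = k j):
   sum_j j k_j = n and sum_j k_j = n - q. *)
Definition k_ok (n q p : nat) (k : {ffun 'I_p.+1 -> 'I_n.+1}) : bool :=
  ((\sum_(j < p.+1) j.+1 * (k j : nat) == n) &&
   (\sum_(j < p.+1) (k j : nat) == n - q))%N.

Definition k_weight (n p : nat) (k : {ffun 'I_p.+1 -> 'I_n.+1}) : rat :=
  ((\prod_(j < p.+1) ((k j)`! * j.+1 ^ (k j)))%N%:R)^-1.

(* Main.v *)
Require Import Defs.
From mathcomp Require Import all_boot all_order all_algebra.
From mathcomp Require Import zify ring.
Set Implicit Arguments. Unset Strict Implicit.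
Local Open Scope ring_scope.

Fixpoint FF (P N n : nat) : rat :=
  match N with
  | 0 => (n == 0%N)%:R
  | N'.+1 => (n%:R)^-1 * \sum_(t < P | (t.+1 <= n)%N) FF P N' (n - t.+1)
  end.

Lemma FF_small P N m : (m < N)%N -> FF P N m = 0.
Proof.
elim: N m => [//|N IH] m /= hm.
rewrite big1 ?mulr0 // => t ht; apply: IH; lia.
Qed.

Definition fcons T N (a : T) (g : {ffun 'I_N -> T}) : {ffun 'I_N.+1 -> T} :=
  [ffun i => if unlift ord0 i is Some j then g j else a].

Lemma fcons0 T N a (g : {ffun 'I_N -> T}) : fcons a g ord0 = a.
Proof. by rewrite ffunE unlift_none. Qed.

Lemma fconsS T N a (g : {ffun 'I_N -> T}) j : fcons a g (lift ord0 j) = g j.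
Proof. by rewrite ffunE liftK. Qed.

Lemma sum_split (T : finType) N (F : {ffun 'I_N.+1 -> T} -> rat) :
  \sum_(f : {ffun 'I_N.+1 -> T}) F f =
  \sum_(a : T) \sum_(g : {ffun 'I_N -> T}) F (fcons a g).
Proof.
rewrite pair_big /=.
rewrite (reindex (fun x : T * {ffun 'I_N -> T} => fcons x.1 x.2)) //.
exists (fun f : {ffun 'I_N.+1 -> T} => (f ord0, [ffun j => f (lift ord0 j)])).
  move=> [a g] _ /=; rewrite fcons0; congr pair; apply/ffunP => j.
  by rewrite ffunE fconsS.
move=> f _; apply/ffunP => i; rewrite ffunE.
by case: unliftP => [j ->|->]; rewrite ?ffunE.
Qed.

Definition Lsum (p N s : nat) : rat :=
  \sum_(m : {ffun 'I_N -> 'I_p.+1} | (\sum_(i < N) (m i : nat) == s)%N)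
   \prod_(i < N) (((\sum_(j < N | (i <= j)%N) (m j : nat)) + (N - i))%N%:R)^-1.

Lemma Lsum0 p s : Lsum p 0 s = (s == 0%N)%:R.
Proof.
rewrite /Lsum; case: s => [|s].
  rewrite (big_pred1 [ffun i => ord0]) ?big_ord0 //.
  move=> m; rewrite big_ord0 /= eqxx; apply/esym/eqP/ffunP => -[].
  by case.
by rewrite big_pred0 // => m; rewrite big_ord0.
Qed.

Lemma Lsum_rec (p N s : nat) :
  Lsum p N.+1 s = ((s + N.+1)%N%:R)^-1 *
     \sum_(a < p.+1 | (a <= s)%N) Lsum p N (s - a)%N.
Proof.
rewrite /Lsum big_mkcond /= sum_split [in RHS]big_mkcond mulr_sumr.
apply: eq_bigr => a _.
case: (leqP (a : nat) s) => has; last first.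
  rewrite mulr0; apply: big1 => g _.
  rewrite big_ord_recl fcons0.
  have -> : ((a + \sum_(i < N) fcons a g (lift ord0 i))%N == s) = false.
    apply/negbTE; lia.
  by [].
rewrite [in RHS]big_mkcond mulr_sumr; apply: eq_bigr => g _.
rewrite big_ord_recl fcons0.
have E : (\sum_(i < N) (fcons a g (lift ord0 i) : nat) = \sum_(i < N) (g i : nat))%N.
  by apply: eq_bigr => i _; rewrite fconsS.
rewrite E.
have -> : ((a + \sum_(i < N) g i)%N == s) = ((\sum_(i < N) g i)%N == (s - a)%N).
  apply/eqP/eqP; lia.
case: eqP => hg; last by rewrite mulr0.
rewrite big_ord_recl; congr (_ * _).
  congr (_ ^-1); congr (_ %:R).
  rewrite (eq_bigl xpredT) // big_ord_recl fcons0 E /=. by rewrite subn0 hg (subnKC has).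
apply: eq_bigr => i _; congr (_ ^-1); congr (_ %:R).
rewrite big_mkcond big_ord_recl /= -big_mkcond /=.
rewrite /bump /=; congr (_ + _)%N.
by apply: eq_big => [j|j _]; rewrite ?fconsS.
Qed.

Lemma Lsum_FF p N s : Lsum p N s = FF p.+1 N (s + N).
Proof.
elim: N s => [|N IH] s; first by rewrite Lsum0 addn0.
rewrite Lsum_rec /= addnS; congr (_ * _).
rewrite [RHS]big_mkcond [LHS]big_mkcond; apply: eq_bigr => t _.
rewrite IH.
case: ifP => h1; case: ifP => h2 //; try lia.
- by f_equal; lia.
- rewrite FF_small //; lia.
Qed.

Section G.
Variables (P b : nat).
Implicit Types (k : {ffun 'I_P -> 'I_b.+1}).

Definition wt k : rat := ((\prod_(j < P) ((k j)`! * j.+1 ^ (k j)))%N%:R)^-1.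
Definition cnd (n N : nat) k : bool :=
  ((\sum_(j < P) j.+1 * k j == n) && (\sum_(j < P) (k j : nat) == N))%N.
Definition Gsum (n N : nat) : rat := \sum_(k | cnd n N k) wt k.
Definition upd k (j : 'I_P) (x : nat) : {ffun 'I_P -> 'I_b.+1} :=
  [ffun i => if i == j then inord x else k i].

Lemma sum_upd (c : 'I_P -> nat) k j x : (x <= b)%N ->
  (\sum_(i < P) c i * upd k j x i + c j * k j = \sum_(i < P) c i * k i + c j * x)%N.
Proof.
move=> hx; rewrite (bigD1 j) // [in RHS](bigD1 j) //= ffunE eqxx inordK //.
rewrite (eq_bigr (fun i => c i * k i)%N); last first.
  by move=> i /negbTE hi; rewrite ffunE hi.
lia.
Qed.

Lemma prod_upd (g : 'I_P -> nat -> nat) k j x : (x <= b)%N ->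
  (\prod_(i < P) g i (upd k j x i) * g j (k j) = \prod_(i < P) g i (k i) * g j x)%N.
Proof.
move=> hx; rewrite (bigD1 j) // [in RHS](bigD1 j) //= ffunE eqxx inordK //.
rewrite (eq_bigr (fun i => g i (k i))); last first.
  by move=> i /negbTE hi; rewrite ffunE hi.
by rewrite mulnAC [RHS]mulnAC (mulnC (g j x)).
Qed.

Lemma sum_upd1 k j x : (x <= b)%N ->
  (\sum_(i < P) (upd k j x i : nat) + k j = \sum_(i < P) (k i : nat) + x)%N.
Proof.
move=> hx; rewrite (bigD1 j) // [in RHS](bigD1 j) //= ffunE eqxx inordK //.
rewrite (eq_bigr (fun i => (k i : nat))); last first.
  by move=> i /negbTE hi; rewrite ffunE hi.
by rewrite addnAC [RHS]addnAC (addnC x).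
Qed.

Lemma term_le (c : 'I_P -> nat) k j :
  (c j * k j <= \sum_(i < P) c i * k i)%N.
Proof. by rewrite (bigD1 j) //= leq_addr. Qed.

Lemma inord_big : (inord b.+1 : 'I_b.+1) = ord0.
Proof. by apply: val_inj; rewrite /inord /insubd insubF //= ltnn. Qed.


Lemma G_step n N (j : 'I_P) : (j.+1 <= n)%N -> (n <= b)%N ->
  \sum_(k | cnd n N.+1 k) ((j.+1 * k j)%N)%:R * wt k = Gsum (n - j.+1) N.
Proof.
move=> hjn hnb.
rewrite (bigID (fun k => 0 < k j)%N) /= [X in _ + X]big1 ?addr0; last first.
  by move=> k /andP[_]; rewrite lt0n negbK => /eqP ->; rewrite muln0 mul0r.
rewrite (reindex_onto (fun k => upd k j (k j).+1) (fun k => upd k j (k j).-1)) /=;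
  last first.
  move=> k /andP[_ hk]; apply/ffunP => i; rewrite !ffunE.
  case: eqP => [->|//]; apply: val_inj; rewrite eqxx /= !inordK //; have := ltn_ord (k j); lia.
rewrite /Gsum; have key : forall k, (k j < b)%N -> (upd k j (k j).+1 j : nat) = (k j).+1.
  by move=> k hv; rewrite ffunE eqxx inordK.
have key2 : forall k, (k j >= b)%N -> (upd k j (k j).+1 j : nat) = 0%N.
  move=> k hv; rewrite ffunE eqxx.
  have -> : (k j).+1 = b.+1 by have := ltn_ord (k j); lia.
  by rewrite inord_big.
apply: eq_big => k; last first.
  case: (ltnP (k j) b) => hv; last by rewrite key2 // andbF.
  move=> _; rewrite key //.
  have h := prod_upd (fun i y => y`! * i.+1 ^ y)%N k j hv.
  rewrite /= factS expnS in h.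
  have gp : (0 < (k j)`! * j.+1 ^ k j)%N by rewrite muln_gt0 fact_gt0 expn_gt0.
  have E : (\prod_(i < P) ((upd k j (k j).+1 i)`! * i.+1 ^ upd k j (k j).+1 i)
     = (j.+1 * (k j).+1) * \prod_(i < P) ((k i)`! * i.+1 ^ k i))%N.
    apply/eqP; rewrite -(eqn_pmul2r gp) h; apply/eqP.
    ring.
  rewrite /wt E [X in _ * X^-1]natrM invfM mulrA divff ?mul1r //.
  by rewrite pnatr_eq0 muln_eq0.
case: (ltnP (k j) b) => hv.
  have d : upd (upd k j (k j).+1) j (upd k j (k j).+1 j).-1 == k.
    rewrite key //=; apply/eqP/ffunP => i; rewrite !ffunE.
    case: eqP => [->|//]; apply: val_inj. by rewrite inord_val.
  rewrite d key // ltn0Sn !andbT /cnd.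
  have h1 := sum_upd (fun i => i.+1) k j hv.
  have h2 := sum_upd1 k j hv.
  apply/idP/idP => /andP[/eqP a /eqP c]; apply/andP; split; apply/eqP; lia.
rewrite key2 // andbF /= /cnd; apply/esym/negbTE/nandP; left.
apply/eqP => he; have := term_le (fun i => i.+1) k j.
rewrite /= he; have : (k j <= j.+1 * k j)%N by rewrite leq_pmull.
lia.
Qed.

Lemma G_rec n N : (0 < n)%N -> (n <= b)%N ->
  n%:R * Gsum n N.+1 = \sum_(j < P | (j.+1 <= n)%N) Gsum (n - j.+1) N.
Proof.
move=> hn hnb; rewrite /Gsum mulr_sumr.
rewrite (eq_bigr (fun k => \sum_(j < P) ((j.+1 * k j)%N)%:R * wt k)); last first.
  move=> k /andP[/eqP h _]; rewrite -{1}h natr_sum mulr_suml //.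
rewrite exchange_big /= [RHS]big_mkcond /=; apply: eq_bigr => j _.
case: ifP => hj; first exact: G_step.
apply: big1 => k /andP[/eqP h _].
have := term_le (fun i => i.+1) k j; rewrite /= h => hl.
have -> : (k j = 0 :> nat)%N.
  apply/eqP; rewrite -leqn0; apply: contraFT hj; rewrite -ltnNge => hk.
  apply: leq_trans hl; rewrite -{1}(muln1 j.+1) leq_mul2l; lia.
by rewrite muln0 mul0r.
Qed.

Lemma Gsum0 n : Gsum n 0 = (n == 0%N)%:R.
Proof.
rewrite /Gsum; case: n => [|n].
  rewrite (big_pred1 [ffun => ord0]).
    rewrite /wt big1 ?invr1 // => i _; rewrite ffunE //.
  move=> k; rewrite /cnd; apply/idP/eqP.
    move=> /andP[_]; rewrite sum_nat_eq0 => /forallP h.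
    by apply/ffunP => i; rewrite ffunE; apply: val_inj; apply/eqP; apply: (h i).
  move=> ->; rewrite !big1 // => i _; rewrite ffunE ?muln0 //.
rewrite big_pred0 // => k; apply/negbTE/nandP.
case: (boolP (\sum_(j < P) (k j : nat) == 0)%N) => h; last by right.
left; rewrite sum_nat_eq0 in h; rewrite big1 // => i _.
by move/forallP: h => /(_ i) /eqP ->; rewrite muln0.
Qed.

Lemma Gsum_FF n N : (n <= b)%N -> Gsum n N = FF P N n.
Proof.
elim: N n => [|N IH] n hnb; first by rewrite Gsum0.
case: n hnb => [|n] hnb.
  rewrite /= invr0 mul0r /Gsum big_pred0 // => k; apply/negbTE/nandP.
  case: (boolP (\sum_(j < P) j.+1 * k j == 0)%N) => h; last by left.
  right; rewrite sum_nat_eq0 in h; rewrite big1 // => i _.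
  by move/forallP: h => /(_ i); rewrite muln_eq0 /= => /eqP ->.
have nz : (n.+1%:R : rat) != 0 by rewrite pnatr_eq0.
apply: (mulfI nz); rewrite G_rec // /= mulrA mulfV // mul1r.
apply: eq_bigr => t ht; apply: IH; lia.
Qed.

End G.

Theorem mainTheorem8 (p n q : nat) :
  (q <= (p * n) %/ p.+1)%N ->
  \sum_(m : {ffun 'I_(n - q) -> 'I_p.+1} | in_S m) pi_m m
  = \sum_(k : {ffun 'I_p.+1 -> 'I_n.+1} | k_ok q k) k_weight k.
Proof.
move=> hq.
have qn : (q <= n)%N.
  apply: leq_trans hq _.
  apply: leq_trans (leq_div2r p.+1 (leq_mul (leqnSn p) (leqnn n))) _.
  by rewrite mulKn.
transitivity (Lsum p (n - q) q); first by [].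
transitivity (Gsum p.+1 n n (n - q)); last by [].
by rewrite Lsum_FF Gsum_FF // subnKC.
Qed.
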